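(* Suppose $B$ is small and let $\sigma\in\Sigma$. (a) The $B$-graded ring $S_{B,\sigma}$ is strongly graded, i.e. $(S_{B,\sigma})_{\alpha+\beta}$ is the additive subgroup generated by the products $(S_{B,\sigma})_\alpha(S_{B,\sigma})_\beta$ for all $\alpha,\beta\in B$. (b) For every $B$-graded $S_B$-module $F$ and every $\alpha\in B$ there is an isomorphism of $S_{(\sigma)}$-modules $(F_\sigma)_\alpha\cong F_{(\sigma)}$.
   Context: Let $V$ be a real vector space of finite dimension $n$, $N\subseteq V$ a lattice (free $\mathbb{Z}$-submodule of rank $n$ spanning $V$), $M=\mathrm{Hom}(N,\mathbb{Z})$. Let $\Sigma$ be an $N$-fan: a finite set of sharp (containing no line) polyhedral cones in $V$, each the conic hull of finitely many elements of $N$, closed under faces, with the intersection of two cones a face of each; $\tau\preccurlyeq\sigma$ means $\tau$ is a face of $\sigma$. Let $\Sigma_1$ be the set of rays, $\sigma_1$ the rays that are faces of $\sigma$, $\rho_N$ the primitive generator of $N\cap\rho$. Let $c\colon M\to\mathbb{Z}^{\Sigma_1}$, $m\mapsto(m(\rho_N))_\rho$, $a\colon\mathbb{Z}^{\Sigma_1}\to A$ its cokernel, $\alpha_\rho=a(\delta_\rho)$, and $\widehat\alpha_\sigma=\sum_{\rho\in\Sigma_1\setminus\sigma_1}\alpha_\rho$. Picard group: with $\sigma^\perp_M=\{u\in M\mid u(\sigma)=0\}$, let $\overline P$ be the group of families $(m_\sigma)_{\sigma\in\Sigma}\in M^\Sigma$ with $m_\sigma-m_\tau\in\tau^\perp_M$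 for all $\tau\preccurlyeq\sigma$, modulo $\prod_\sigma\sigma^\perp_M$; $\mathrm{Pic}(\Sigma)$ is $\overline P$ modulo the image of the diagonal $M\to\overline P$; it is regarded as a subgroup of $A$ via the injective map induced by $(m_\sigma)\mapsto a((m_\rho(\rho_N))_{\rho\in\Sigma_1})$. Let $B\subseteq A$ be a subgroup of finite index (''big''); $B$ is called small if $B\subseteq\mathrm{Pic}(\Sigma)$. Let $R$ be a commutative ring, $S_A=R[Z_\rho\mid\rho\in\Sigma_1]$ graded by $A$ with $\deg Z_\rho=\alpha_\rho$, and $S_B=\bigoplus_{\alpha\in B}(S_A)_\alpha$. For $\sigma\in\Sigma$ let $\widehat Z_\sigma=\prod_{\rho\in\Sigma_1\setminus\sigma_1}Z_\rho$ (of degree $\widehat\alpha_\sigma$); choose $m\geq1$ with $m\widehat\alpha_\sigma\in B$ for all $\sigma$. For a $B$-graded $S_B$-module $F$, $F_\sigma$ denotes the $B$-graded localization of $F$ at $\widehat Z_\sigma^m$ (independent of $m$), $S_{B,\sigma}=(S_B)_\sigma$, $F_{(\sigma)}=(F_\sigma)_0$ and $S_{(\sigma)}=(S_{B,\sigma})_0$. *)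

(* Defs.v *)
From HB Require Import structures.
From mathcomp Require Import all_boot all_order all_algebra.
From mathcomp Require Import boolp reals.
From mathcomp Require Import mpoly.
From Stdlib Require List.

Set Implicit Arguments.
Unset Strict Implicit.
Unset Printing Implicit Defensive.

Import GRing.Theory Num.Theory.
Local Open Scope ring_scope.

(* Geometry: V = R^n (rows), N = Z^n embedded in V, M = Hom(N,Z) = Z^n *)

Section Geometry.
Variables (Rl : realType) (n : nat).

Definition embedZ (v : 'rV[int]_n) : 'rV[Rl]_n := map_mx (fun z : int => z%:~R) v.

Definition dotR (u x : 'rV[Rl]_n) : Rl := (u *m x^T) 0 0.

Definition cone (g : seq 'rV[int]_n) : 'rV[Rl]_n -> Prop :=
  fun x => exists t : 'I_(size g) -> Rl,
    (forall i, 0 <= t i) /\ x = \sum_(i < size g) t i *: embedZ g`_i.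

Definition is_face (C F : 'rV[Rl]_n -> Prop) : Prop :=
  exists u : 'rV[Rl]_n, (forall x, C x -> 0 <= dotR u x) /\
                        (forall x, F x <-> C x /\ dotR u x = 0).

Definition sharp (C : 'rV[Rl]_n -> Prop) : Prop :=
  forall x, C x -> C (- x) -> x = 0.

Definition is_ray (C : 'rV[Rl]_n -> Prop) : Prop :=
  exists v : 'rV[Rl]_n, v != 0 /\ forall x, C x <-> exists t : Rl, 0 <= t /\ x = t *: v.

Definition prim_gen (C : 'rV[Rl]_n -> Prop) (p : 'rV[int]_n) : Prop :=
  [/\ C (embedZ p), p != 0 &
      forall v : 'rV[int]_n, C (embedZ v) -> exists a : nat, v = p *+ a].

Definition perp_M (C : 'rV[Rl]_n -> Prop) (u : 'rV[int]_n) : Prop :=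
  forall x, C x -> dotR (embedZ u) x = 0.

(** An N-fan, given as an injective family of cones indexed by 'I_k,
    each cone being the conic hull of a finite list of lattice points. *)
Definition is_fan (k : nat) (gens : 'I_k -> seq 'rV[int]_n) : Prop :=
  [/\ forall i, sharp (cone (gens i)),
      forall i j, (forall x, cone (gens i) x <-> cone (gens j) x) -> i = j,
      forall i (F : 'rV[Rl]_n -> Prop), is_face (cone (gens i)) F ->
        exists j, forall x, F x <-> cone (gens j) x &
      forall i j,
        is_face (cone (gens i)) (fun x => cone (gens i) x /\ cone (gens j) x) /\
        is_face (cone (gens j)) (fun x => cone (gens i) x /\ cone (gens j) x)].

Definition enum_rays (k r : nat) (gens : 'I_k -> seq 'rV[int]_n) (ray : 'I_r -> 'I_k) :=
  injective ray /\ forall i, is_ray (cone (gens i)) <-> exists j, ray j = i.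

End Geometry.

Section ClassGroup.
Variables (n r : nat).

Definition dotZ (u v : 'rV[int]_n) : int := (u *m v^T) 0 0.

(** the matrix of c : M -> Z^{Sigma_1}, m |-> (m(rho_N))_rho *)
Definition Cmat (rN : 'I_r -> 'rV[int]_n) : 'M[int]_(n, r) := \matrix_(l, j) rN j 0 l.

Variable C : 'M[int]_(n, r).

Definition clP (d : 'rV[int]_r) : 'rV[int]_r -> Prop :=
  fun d' => exists u : 'rV[int]_n, d' - d = u *m C.

(** A = Z^{Sigma_1} / c(M), as the type of cosets *)
Definition Agrp : Type := {P : 'rV[int]_r -> Prop | exists d, P = clP d}.

Definition acl (d : 'rV[int]_r) : Agrp :=
  exist (fun P => exists d, P = clP d) (clP d) (ex_intro _ d erefl).

Definition arep (a : Agrp) : 'rV[int]_r := projT1 (cid (proj2_sig a)).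

Definition a0 : Agrp := acl 0.
Definition aadd (a b : Agrp) : Agrp := acl (arep a + arep b).
Definition aopp (a : Agrp) : Agrp := acl (- arep a).
Definition amuln (a : Agrp) (k : nat) : Agrp := acl (arep a *+ k).

Definition is_subgroupA (B : Agrp -> Prop) : Prop :=
  [/\ B a0, forall a b, B a -> B b -> B (aadd a b) & forall a, B a -> B (aopp a)].

Definition finite_indexA (B : Agrp -> Prop) : Prop :=
  exists s : seq Agrp, forall a, exists b, List.In b s /\ B (aadd a (aopp b)).

End ClassGroup.

Section FanData.
Variables (Rl : realType) (n k r : nat) (gens : 'I_k -> seq 'rV[int]_n)
          (ray : 'I_r -> 'I_k) (rN : 'I_r -> 'rV[int]_n).

Definition in_sig1 (s : 'I_k) (j : 'I_r) : Prop :=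
  is_face (@cone Rl n (gens s)) (@cone Rl n (gens (ray j))).

Definition hatv (s : 'I_k) : 'rV[int]_r :=
  \row_j (if `[< in_sig1 s j >] then 0 else 1).

Definition hatalpha (s : 'I_k) : Agrp (Cmat rN) := acl (Cmat rN) (hatv s).

Definition in_Pic (a : Agrp (Cmat rN)) : Prop :=
  exists ms : 'I_k -> 'rV[int]_n,
    (forall s t, is_face (@cone Rl n (gens s)) (@cone Rl n (gens t)) ->
                 perp_M (@cone Rl n (gens t)) (ms s - ms t)) /\
    a = acl (Cmat rN) (\row_j dotZ (ms (ray j)) (rN j)).

Definition hatZ (R : comRingType) (s : 'I_k) : {mpoly R[r]} :=
  \prod_(j : 'I_r | ~~ `[< in_sig1 s j >]) 'X_j.

End FanData.

Section Graded.
Variables (R : comRingType) (n r : nat) (C : 'M[int]_(n, r)) (B : Agrp C -> Prop).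

Definition mdegA (mm : 'X_{1..r}) : Agrp C := acl C (\row_j (mm j)%:Z).

Definition homA (a : Agrp C) (p : {mpoly R[r]}) : Prop :=
  forall mm, mm \in msupp p -> mdegA mm = a.

Definition inSB (p : {mpoly R[r]}) : Prop :=
  forall mm, mm \in msupp p -> B (mdegA mm).

(** (F, Fh, act) is a B-graded S_B-module: F = (+)_{a in B} Fh a *)
Definition graded_SB_module (F : zmodType) (Fh : Agrp C -> F -> Prop)
    (act : {mpoly R[r]} -> F -> F) : Prop :=
  [/\ forall a, B a -> Fh a 0 /\ (forall x y, Fh a x -> Fh a y -> Fh a (x - y)),
      forall x : F, exists s : seq (Agrp C * F),
        List.Forall (fun p => B p.1 /\ Fh p.1 p.2) s /\ x = \sum_(p <- s) p.2,
      forall s : seq (Agrp C * F), List.NoDup (map fst s) ->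
        List.Forall (fun p => B p.1 /\ Fh p.1 p.2) s ->
        \sum_(p <- s) p.2 = 0 -> List.Forall (fun p => p.2 = 0) s,
      forall p q x y, inSB p -> inSB q ->
        [/\ act (p + q) x = act p x + act q x,
            act p (x + y) = act p x + act p y,
            act (p * q) x = act p (act q x) &
            act 1 x = x] &
      forall a b p x, B a -> B b -> homA b p -> Fh a x -> Fh (aadd a b) (act p x)].

(** Localization of a graded module at the powers of s (of degree sdeg):
    a pair (k, x) represents x / s^k. *)
Section Loc.
Variables (F : zmodType) (Fh : Agrp C -> F -> Prop) (act : {mpoly R[r]} -> F -> F)
          (s : {mpoly R[r]}) (sdeg : Agrp C).

Definition loc_eqv (z w : nat * F) : Prop :=
  exists j : nat, act (s ^+ j) (act (s ^+ w.1) z.2 - act (s ^+ z.1) w.2) = 0.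

Definition loc_add (z w : nat * F) : nat * F :=
  ((z.1 + w.1)%N, act (s ^+ w.1) z.2 + act (s ^+ z.1) w.2).

Definition loc_piece (g : Agrp C) (z : nat * F) : Prop :=
  Fh (aadd g (amuln sdeg z.1)) z.2.

Definition loc_hom (g : Agrp C) (z : nat * F) : Prop :=
  exists w, loc_piece g w /\ loc_eqv z w.

Definition loc_sact (a : nat * {mpoly R[r]}) (z : nat * F) : nat * F :=
  ((a.1 + z.1)%N, act a.2 z.2).

End Loc.
End Graded.

(** The module M1 (resp. M2) consists of the classes, for the equivalence
    [eqv], of the representatives satisfying P (resp. Q); addition is [add]
    and the scalars (classes of representatives satisfying Sc) act by
    [sact].  [rep_mod_iso] says there is a map of representatives inducing a
    well-defined bijective additive and scalar-compatible map M1 -> M2,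
    i.e. an isomorphism of modules M1 ~= M2. *)
Definition rep_mod_iso (X S : Type) (P Q : X -> Prop) (eqv : X -> X -> Prop)
    (add : X -> X -> X) (Sc : S -> Prop) (sact : S -> X -> X) : Prop :=
  exists phi : X -> X,
    [/\ forall z, P z -> Q (phi z),
        forall z z', P z -> P z' -> eqv z z' -> eqv (phi z) (phi z'),
        forall z z', P z -> P z' -> eqv (phi z) (phi z') -> eqv z z',
        forall w, Q w -> exists z, P z /\ eqv (phi z) w &
        (forall z z', P z -> P z' -> eqv (phi (add z z')) (add (phi z) (phi z'))) /\
        (forall a z, Sc a -> P z -> eqv (phi (sact a z)) (sact a (phi z)))].

(** In the localized ring S_B[s^-1] (fractions p / s^k represented by
    (k, p)): the element  sum_i c_i * (u_i * v_i)  for a list of triples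
    (c_i, u_i, v_i) with c_i integers. *)
Definition ring_loc_lincomb (R : comRingType) (r : nat) (s : {mpoly R[r]})
    (l : seq (int * (nat * {mpoly R[r]}) * (nat * {mpoly R[r]}))) : nat * {mpoly R[r]} :=
  foldr (fun t acc =>
           loc_add *%R s
             (((t.1.2.1 + t.2.1)%N, (t.1.2.2 * t.2.2) *~ t.1.1)) acc)
        (0%N, 0) l.

(* Main.v *)
Require Import Defs.
From HB Require Import structures.
From mathcomp Require Import all_boot all_order all_algebra.
From mathcomp Require Import boolp reals.
From mathcomp Require Import mpoly.
From mathcomp Require Import zify ring lra.
From Stdlib Require List.
Import Order.TTheory GRing.Theory Num.Theory.
Local Open Scope ring_scope.
Set Implicit Arguments. Unset Strict Implicit. Unset Printing Implicit Defensive.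

Section AG.
Variables (n r : nat) (C : 'M[int]_(n, r)).

Lemma acl_eqP (d e : 'rV[int]_r) : (exists u : 'rV[int]_n, e - d = u *m C) -> acl C d = acl C e.
Proof.
move=> [u hu]; apply: eq_exist; apply: funext => x; apply: propext; split.
  move=> [v hv]; exists (v - u); by rewrite mulmxBl -hv -hu opprB addrA subrK.
move=> [v hv]; exists (v + u); by rewrite mulmxDl -hv -hu addrA subrK.
Qed.

Lemma acl_rel (d e : 'rV[int]_r) : acl C d = acl C e -> exists u : 'rV[int]_n, e - d = u *m C.
Proof.
move=> h; have : clP C d e.
  have -> : clP C d = proj1_sig (acl C d) by [].
  by rewrite h; exists 0; rewrite subrr mul0mx.
by [].
Qed.

Lemma aclK (a : Agrp C) : acl C (arep a) = a.
Proof.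
case: a => P hP; apply: eq_exist => /=.
rewrite /arep /=; case: (cid hP) => d hd /=; by rewrite hd.
Qed.

Lemma arep_rel d : exists u : 'rV[int]_n, arep (acl C d) - d = u *m C.
Proof. by apply: acl_rel; rewrite aclK. Qed.

Lemma aaddE d e : aadd (acl C d) (acl C e) = acl C (d + e).
Proof.
apply/esym/acl_eqP; have [u hu] := arep_rel d; have [v hv] := arep_rel e.
exists (u + v); by rewrite mulmxDl -hu -hv opprD addrACA.
Qed.

Lemma aoppE d : aopp (acl C d) = acl C (- d).
Proof.
apply/esym/acl_eqP; have [u hu] := arep_rel d.
by exists (- u); rewrite mulNmx -hu opprB opprK addrC.
Qed.

Lemma mulmxMn_ (u : 'rV[int]_n) k : (u *+ k) *m C = (u *m C) *+ k.
Proof. elim: k => [|k ih]; first by rewrite !mulr0n mul0mx. by rewrite !mulrS mulmxDl ih. Qed.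

Lemma amulnE d k : amuln (acl C d) k = acl C (d *+ k).
Proof.
apply/esym/acl_eqP; have [u hu] := arep_rel d.
by exists (u *+ k); rewrite mulmxMn_ -hu mulrnBl.
Qed.

Lemma acl_mul (u : 'rV[int]_n) d : acl C (u *m C + d) = acl C d.
Proof. by apply/acl_eqP; exists (- u); rewrite mulNmx opprD addrCA subrr addr0. Qed.

Lemma Bsub_addE (B : Agrp C -> Prop) : is_subgroupA B -> forall d e, B (acl C d) -> B (acl C e) -> B (acl C (d + e)).
Proof. by case=> _ h _ d e hd he; rewrite -aaddE; apply: h. Qed.

Lemma Bsub_oppE (B : Agrp C -> Prop) : is_subgroupA B -> forall d, B (acl C d) -> B (acl C (- d)).
Proof. by case=> _ _ h d hd; rewrite -aoppE; apply: h. Qed.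

Lemma Bsub_mulnE (B : Agrp C -> Prop) : is_subgroupA B -> forall d k, B (acl C d) -> B (acl C (d *+ k)).
Proof.
move=> hB d k hd; elim: k => [|k ih]; first by case: hB.
by rewrite mulrS; apply: Bsub_addE.
Qed.
End AG.

Section HG.
Variables (R : comRingType) (n r : nat) (C : 'M[int]_(n, r)).
Implicit Types (p q : {mpoly R[r]}) (a b : Agrp C).

Definition degv (mm : 'X_{1..r}) : 'rV[int]_r := \row_j (mm j)%:Z.

Lemma homA0 a : homA a (0 : {mpoly R[r]}).
Proof. by move=> mm; have /eqP -> : msupp (0 : {mpoly R[r]}) == [::] by rewrite msupp_eq0. Qed.

Lemma homAD a p q : homA a p -> homA a q -> homA a (p + q).
Proof. by move=> hp hq mm /msuppD_le; rewrite mem_cat => /orP [/hp|/hq]. Qed.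

Lemma homAz a p (z : int) : homA a p -> homA a (p *~ z).
Proof. by move=> hp mm; rewrite -scaler_int => /msuppZ_le /hp. Qed.

Lemma homAX mm : homA (mdegA C mm) ('X_[mm] : {mpoly R[r]}).
Proof. by move=> m'; rewrite msuppX mem_seq1 => /eqP ->. Qed.

Lemma mdegAD m1 m2 : mdegA C (m1 + m2)%MM = aadd (mdegA C m1) (mdegA C m2).
Proof.
rewrite /mdegA aaddE; congr (acl C _); apply/matrixP => i j; by rewrite !mxE mnmDE PoszD.
Qed.

Lemma homAM a b p q : homA a p -> homA b q -> homA (aadd a b) (p * q).
Proof.
move=> hp hq mm /msuppM_le /allpairsP [[m1 m2] /= [h1 h2 ->]].
by rewrite mdegAD (hp _ h1) (hq _ h2).
Qed.

Lemma homA_eq a b p : homA a p -> a = b -> homA b p.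
Proof. by move=> h <-. Qed.
End HG.

Lemma dotR_embed (Rl : realType) n (u v : 'rV[int]_n) :
  dotR (embedZ Rl u) (embedZ Rl v) = (dotZ u v)%:~R.
Proof.
rewrite /dotR /dotZ !mxE rmorph_sum; apply: eq_bigr => l _.
by rewrite !mxE rmorphM.
Qed.

Lemma dotZB n (x y v : 'rV[int]_n) : dotZ (x - y) v = dotZ x v - dotZ y v.
Proof. by rewrite /dotZ mulmxBl !mxE. Qed.

Lemma CmatE n r (rN : 'I_r -> 'rV[int]_n) (u : 'rV[int]_n) j :
  (u *m Cmat rN) 0 j = dotZ u (rN j).
Proof.
rewrite /dotZ !mxE; apply: eq_bigr => l _; by rewrite !mxE.
Qed.

Section Fan.
Variables (Rl : realType) (R : comRingType) (n k r : nat)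
  (gens : 'I_k -> seq 'rV[int]_n) (ray : 'I_r -> 'I_k) (rN : 'I_r -> 'rV[int]_n)
  (sigma : 'I_k) (m : nat).

Local Notation C := (Cmat rN).
Local Notation P j := `[< in_sig1 Rl gens ray sigma j >].

Definition hmu : 'X_{1..r} := (\sum_(j : 'I_r | ~~ P j) U_(j))%MM.

Lemma hmuE j : hmu j = if P j then 0%N else 1%N.
Proof.
rewrite /hmu mnm_sumE; case: (boolP (P j)) => hj.
  rewrite big1 // => i hi; rewrite mnm1E; apply/eqP; rewrite eqb0.
  by apply/eqP => eij; move: hi; rewrite eij hj.
rewrite (bigD1 j) //= mnm1E eqxx big1 // => i /andP [_ hij].
by rewrite mnm1E (negbTE hij).
Qed.

Lemma hatZE : hatZ Rl gens ray R sigma = 'X_[hmu].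
Proof.
by rewrite /hatZ /hmu (big_morph (@mpolyX r R) (@mpolyXD _ _) (@mpolyX0 _ _)).
Qed.

Lemma degv_hmu N : degv (hmu *+ N)%MM = hatv Rl gens ray sigma *+ N.
Proof.
apply/matrixP => i j; rewrite !(mxE, mulmxnE) mulmnE hmuE.
by case: (P j); rewrite ?mul0n ?mul1n ?mul0rn // pmulrn intz.
Qed.

Lemma s_powE j : (hatZ Rl gens ray R sigma ^+ m) ^+ j = 'X_[hmu *+ (m * j)].
Proof. by rewrite -exprM hatZE mpolyXn. Qed.

Lemma homA_s j : homA (amuln (amuln (hatalpha Rl gens ray rN sigma) m) j)
                      ((hatZ Rl gens ray R sigma ^+ m) ^+ j).
Proof.
rewrite s_powE; apply: (homA_eq (@homAX R n r C (hmu *+ (m * j)))).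

by rewrite /mdegA /hatalpha !amulnE -mulrnA -degv_hmu.
Qed.
End Fan.

Lemma absbound (d : int) (K m : nat) : (`|d| <= K)%N -> (0 < m)%N -> 0 <= d + (m * K)%:Z /\ 0 <= - d + (m * K)%:Z.
Proof.
move=> h1 h2.
have h3 : (`|d|%N)%:Z <= K%:Z by rewrite lez_nat.
rewrite abszE in h3.
have h4 := ler_norm (- d). rewrite normrN in h4.
have h5 := ler_norm d.
have h6 : (K <= m * K)%N by rewrite leq_pmull.
have h7 : K%:Z <= (m*K)%:Z by rewrite lez_nat.
lia.
Qed.

Section Fan2.
Variables (Rl : realType) (R : comRingType) (n k r : nat)
  (gens : 'I_k -> seq 'rV[int]_n) (ray : 'I_r -> 'I_k) (rN : 'I_r -> 'rV[int]_n)
  (sigma : 'I_k) (m : nat).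

Local Notation C := (Cmat rN).
Local Notation P j := `[< in_sig1 Rl gens ray sigma j >].

Lemma units_ex (d : 'rV[int]_r) : (forall j, P j -> d 0 j = 0) -> (0 < m)%N ->
  exists K (e e' : 'X_{1..r}), [/\ degv e = d + hatv Rl gens ray sigma *+ (m*K),
      degv e' = - d + hatv Rl gens ray sigma *+ (m*K) & (e + e')%MM = (hmu Rl gens ray sigma *+ (m * (K+K)))%MM].
Proof.
move=> hd hm.
set K := (\sum_j `|d 0%R j|)%N.
have hK j : (`|d 0%R j| <= K)%N by rewrite /K (bigD1 j) //= leq_addr.
set h := hatv Rl gens ray sigma.
have hh j : h 0 j = if P j then 0 else 1 by rewrite mxE.
have hpos j : 0 <= d 0 j + h 0 j * (m*K)%:Z /\ 0 <= - d 0 j + h 0 j * (m*K)%:Z.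
  rewrite hh; case: ifP => hj; last by rewrite mul1r; exact: absbound.
  by rewrite (hd j hj) mul0r addr0 ?oppr0.
exists K, [multinom `|(d 0%R j + h 0%R j * (m*K)%:Z)%R|%N | j < r],
   [multinom `|(- d 0%R j + h 0%R j * (m*K)%:Z)%R|%N | j < r].
split.
- apply/matrixP => i j; rewrite (ord1 i) !(mxE, mulmxnE) mnmE gez0_abs; last exact (hpos j).1.
  by rewrite hh -mulr_natr natz.
- apply/matrixP => i j; rewrite (ord1 i) !(mxE, mulmxnE) mnmE gez0_abs; last exact (hpos j).2.
  by rewrite hh -mulr_natr natz.
- apply/mnmP => j; rewrite mnmDE !mnmE mulmnE hmuE.
  have := hpos j; have := hh j; case: (P j) => hj [h1 h2]; apply/eqP; rewrite -eqz_nat PoszD !gez0_abs //;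
  rewrite hj; rewrite ?PoszM; apply/eqP; lia.
Qed.

Lemma pic_dec (a : Agrp C) : in_Pic Rl gens ray a ->
  (forall j, prim_gen (@cone Rl n (gens (ray j))) (rN j)) ->
  exists d, a = acl C d /\ forall j, P j -> d 0 j = 0.
Proof.
move=> [ms [hms ->]] hpg.
exists (\row_j dotZ (ms (ray j)) (rN j) - ms sigma *m C); split.
  by rewrite -{1}(subrK (ms sigma *m C) (\row_j dotZ (ms (ray j)) (rN j))) addrC acl_mul.
move=> j /asboolP hj.
have := hms _ _ hj (embedZ Rl (rN j)); case: (hpg j) => hc _ _ /(_ hc).
rewrite dotR_embed => /eqP; rewrite intr_eq0 dotZB => /eqP h.
have -> : (\row_j0 dotZ (ms (ray j0)) (rN j0) - ms sigma *m C) 0 j = dotZ (ms (ray j)) (rN j) - dotZ (ms sigma) (rN j) by rewrite -(CmatE rN (ms sigma)) !mxE.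
apply/eqP; rewrite subr_eq0; apply/eqP; move/eqP: h; rewrite subr_eq0 => /eqP ->.
by [].
Qed.
End Fan2.

Section Mod.
Variables (R : comRingType) (r : nat) (F : zmodType) (act : {mpoly R[r]} -> F -> F)
  (good : {mpoly R[r]} -> Prop).
Hypothesis hact : forall p q x y, good p -> good q ->
  [/\ act (p + q) x = act p x + act q x, act p (x + y) = act p x + act p y,
      act (p * q) x = act p (act q x) & act 1 x = x].
Variables (s u u' : {mpoly R[r]}) (K : nat).
Hypotheses (hs : forall i, good (s ^+ i)) (hu : good u) (hu' : good u')
  (huu : u * u' = s ^+ (K + K)).

Lemma actD p x y : good p -> act p (x + y) = act p x + act p y.
Proof. by move=> hp; case: (hact x y hp hp). Qed.

Lemma act0 p : good p -> act p 0 = 0.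
Proof. by move=> hp; apply/(@addrI _ (act p 0)); rewrite -actD // !addr0. Qed.

Lemma actN p x : good p -> act p (- x) = - act p x.
Proof. by move=> hp; apply/(@addrI _ (act p x)); rewrite -actD // !subrr act0. Qed.

Lemma actB p x y : good p -> act p (x - y) = act p x - act p y.
Proof. by move=> hp; rewrite actD // actN. Qed.

Lemma actM p q x : good p -> good q -> act (p * q) x = act p (act q x).
Proof. by move=> hp hq; case: (hact x x hp hq). Qed.

Lemma act1 x : act 1 x = x.
Proof. by case: (hact x x (hs 0) (hs 0)). Qed.

Lemma actC p q x : good p -> good q -> act p (act q x) = act q (act p x).
Proof. by move=> hp hq; rewrite -!actM // mulrC. Qed.

Lemma actss i j x : act (s ^+ i) (act (s ^+ j) x) = act (s ^+ (i + j)) x.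
Proof. by rewrite exprD actM. Qed.

Lemma actsp p i x : good p -> act (s ^+ i) (act p x) = act p (act (s ^+ i) x).
Proof. by move=> hp; rewrite actC. Qed.

Lemma actuu' x : act u (act u' x) = act (s ^+ (K + K)) x.
Proof. by rewrite -actM // huu. Qed.

Lemma actu'u x : act u' (act u x) = act (s ^+ (K + K)) x.
Proof. by rewrite -actM // mulrC huu. Qed.

Lemma loc_eqv_refl z : loc_eqv act s z z.
Proof. by exists 0%N; rewrite subrr act0. Qed.

Lemma mod_iso (P Q : nat * F -> Prop) (Sc : nat * {mpoly R[r]} -> Prop) :
  (forall z, P z -> Q ((K + z.1)%N, act u z.2)) ->
  (forall w, Q w -> P ((K + w.1)%N, act u' w.2)) ->
  (forall a, Sc a -> good a.2) ->
  rep_mod_iso P Q (loc_eqv act s) (loc_add act s) Sc (loc_sact act).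
Proof.
move=> hPQ hQP hSc.
exists (fun z => ((K + z.1)%N, act u z.2)); split.
- exact: hPQ.
- move=> [i x] [i' x'] _ _ [j /= hj]; exists j => /=.
  rewrite -(actss K i') -(actss K i) !(actsp _ _ hu) -actB // -actB // (actsp _ _ hu).
  by rewrite (actC _ (hs j) (hs K)) hj !act0.
- move=> [i x] [i' x'] _ _ [j /= hj]; exists (K + K + (j + K))%N => /=.
  have := congr1 (act u') hj; rewrite act0 // !actB //.
  rewrite !(actss, actsp _ _ hu, actsp _ _ hu', actu'u).
  by rewrite !addnA.
- move=> [i x] hw; exists ((K + i)%N, act u' x); split; first exact: (hQP (i, x) hw).
  exists 0%N => /=; rewrite expr0 act1 actuu' !actss.
  by apply/eqP; rewrite subr_eq0; apply/eqP; congr (act (s ^+ _) _); lia.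
split.
- move=> [i x] [i' x'] _ _; exists 0%N => /=; rewrite expr0 act1.
  rewrite !actD // !(actss, actsp _ _ hu).
  apply/eqP; rewrite subr_eq0; apply/eqP.
  by congr (act u (act (s ^+ _) _) + act u (act (s ^+ _) _)); lia.
- move=> [l p] [i x] /hSc /= hp _; exists 0%N => /=; rewrite expr0 act1.
  rewrite (actC x hu hp).
  apply/eqP; rewrite subr_eq0; apply/eqP.
  by congr (act (s ^+ _) _); lia.
Qed.
End Mod.

Ltac agrp := rewrite ?(aaddE, aoppE, amulnE); try rewrite /a0; rewrite ?(aaddE, aoppE, amulnE);
  congr (acl _ _); apply/matrixP => ? ?; rewrite !(mxE, mulmxnE) ?pmulrn ?mulrzz ?PoszD ?PoszM; ring.

Section LC.
Variables (R : comRingType) (n r : nat) (C : 'M[int]_(n, r)) (sd : Agrp C) (s : {mpoly R[r]}).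
Hypothesis hsd : forall j, homA (amuln sd j) (s ^+ j).

Lemma lincomb_hom (a b : Agrp C) l :
  List.Forall (fun t => loc_piece (@homA R n r C) sd a t.1.2 /\ loc_piece (@homA R n r C) sd b t.2) l ->
  homA (aadd (aadd a b) (amuln sd (ring_loc_lincomb s l).1)) (ring_loc_lincomb s l).2.
Proof.
elim: l => [|[[c [i1 p1]] [i2 p2]] l ih] hl /=; first exact: homA0.
inversion hl as [|t l' [h1 h2] hl' E]; subst.
rewrite /loc_piece /= in h1 h2.
apply: homAD.
  eapply homA_eq; [apply: homAM; [apply: hsd | apply: homAz; apply: homAM; [exact: h1|exact: h2]] | ].
  rewrite -(aclK a) -(aclK b) -(aclK sd); agrp.
eapply homA_eq; [apply: homAM; [apply: hsd | exact: (ih hl')] | ].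
rewrite -(aclK a) -(aclK b) -(aclK sd); agrp.
Qed.
End LC.

Lemma homA_inSB (R : comRingType) n r (C : 'M[int]_(n, r)) (B : Agrp C -> Prop) a (p : {mpoly R[r]}) :
  B a -> homA a p -> inSB B p.
Proof. by move=> hB hp mm /hp ->. Qed.

Theorem theorem3p330
  (Rl : realType) (R : comRingType) (n k r : nat)
  (gens : 'I_k -> seq 'rV[int]_n)
  (ray : 'I_r -> 'I_k) (rN : 'I_r -> 'rV[int]_n)
  (B : Agrp (Cmat rN) -> Prop) (m : nat) (sigma : 'I_k) :
  is_fan Rl gens ->
  enum_rays Rl gens ray ->
  (forall j, prim_gen (@cone Rl n (gens (ray j))) (rN j)) ->
  is_subgroupA B -> finite_indexA B ->
  (forall a, B a -> in_Pic Rl gens ray a) ->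
  (0 < m)%N ->
  (forall t : 'I_k, B (amuln (hatalpha Rl gens ray rN t) m)) ->
  (* (a) S_{B,sigma} is strongly graded *)
  (forall a b, B a -> B b ->
     forall z : nat * {mpoly R[r]}, inSB B z.2 ->
       (loc_hom (@homA R n r (Cmat rN)) ( *%R )
                (hatZ Rl gens ray R sigma ^+ m)
                (amuln (hatalpha Rl gens ray rN sigma) m) (aadd a b) z
        <->
        exists l : seq (int * (nat * {mpoly R[r]}) * (nat * {mpoly R[r]})),
          List.Forall (fun t =>
              loc_piece (@homA R n r (Cmat rN)) (amuln (hatalpha Rl gens ray rN sigma) m) a t.1.2 /\
              loc_piece (@homA R n r (Cmat rN)) (amuln (hatalpha Rl gens ray rN sigma) m) b t.2) l /\
          loc_eqv ( *%R ) (hatZ Rl gens ray R sigma ^+ m) z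
                  (ring_loc_lincomb (hatZ Rl gens ray R sigma ^+ m) l)))
  /\
  (* (b) (F_sigma)_alpha ~= F_(sigma) as S_(sigma)-modules *)
  (forall (F : zmodType) (Fh : Agrp (Cmat rN) -> F -> Prop)
          (act : {mpoly R[r]} -> F -> F),
     graded_SB_module B Fh act ->
     forall alpha, B alpha ->
       rep_mod_iso
         (loc_piece Fh (amuln (hatalpha Rl gens ray rN sigma) m) alpha)
         (loc_piece Fh (amuln (hatalpha Rl gens ray rN sigma) m) (a0 (Cmat rN)))
         (loc_eqv act (hatZ Rl gens ray R sigma ^+ m))
         (loc_add act (hatZ Rl gens ray R sigma ^+ m))
         (loc_piece (@homA R n r (Cmat rN)) (amuln (hatalpha Rl gens ray rN sigma) m) (a0 (Cmat rN)))
         (loc_sact act)).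
Proof.
move=> _ _ hpg hsub _ hpic hm hBm.
set s := hatZ Rl gens ray R sigma ^+ m.
set h := hatv Rl gens ray sigma.
have sdE : amuln (hatalpha Rl gens ray rN sigma) m = acl (Cmat rN) (h *+ m).
  by rewrite /hatalpha amulnE.
have hsd := @homA_s Rl R n k r gens ray rN sigma m.
rewrite -/s sdE in hsd.
have hBh : B (acl (Cmat rN) (h *+ m)) by rewrite -sdE.
rewrite sdE.
split.
- move=> a b hBa hBb z _; split.
  + move=> [w [hw [j hj]]].
    have [d [ad hd]] := pic_dec sigma (hpic a hBa) hpg.
    have [K [e [e' [he he' hee]]]] := units_ex hd hm.
    have hXe : homA (acl (Cmat rN) (d + h *+ (m * K))) ('X_[e] : {mpoly R[r]}).
      by rewrite -he; exact: homAX.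
    have hXe' : homA (acl (Cmat rN) (- d + h *+ (m * K))) ('X_[e'] : {mpoly R[r]}).
      by rewrite -he'; exact: homAX.
    exists [:: (1%:Z, (K, 'X_[e]), ((K + w.1)%N, 'X_[e'] * w.2))]; split.
    * constructor; [split|constructor].
      -- rewrite /loc_piece /=; eapply homA_eq; first exact: hXe.
         rewrite ad; agrp.
      -- rewrite /loc_piece /=; eapply homA_eq; first exact: (homAM hXe' hw).
         rewrite ad -(aclK b) ?(aaddE, aoppE, amulnE); congr (acl _ _); apply/matrixP => ? ?; rewrite !(mxE, mulmxnE); ring.
    * exists j => /=.
      rewrite mulr0 addr0 expr0 mul1r mulr1z (mulrA 'X_[e]) -mpolyXD hee -s_powE -/s addn0.
      have -> : s ^+ j * (s ^+ (K + (K + w.1)) * z.2 - s ^+ z.1 * (s ^+ (K + K) * w.2)) =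
         s ^+ (K + K) * (s ^+ j * (s ^+ w.1 * z.2 - s ^+ z.1 * w.2)).
        by rewrite !exprD; ring.
      by rewrite hj mulr0.
  + move=> [l [hl hzl]]; exists (ring_loc_lincomb s l); split => //.
    exact: (lincomb_hom hsd hl).
- move=> F Fh act [_ _ _ h4 h5] alpha hBa.
  have [d [ad hd]] := pic_dec sigma (hpic alpha hBa) hpg.
  have [K [e [e' [he he' hee]]]] := units_ex hd hm.
  have hXe : homA (acl (Cmat rN) (d + h *+ (m * K))) ('X_[e] : {mpoly R[r]}).
    by rewrite -he; exact: homAX.
  have hXe' : homA (acl (Cmat rN) (- d + h *+ (m * K))) ('X_[e'] : {mpoly R[r]}).
    by rewrite -he'; exact: homAX.
  have hBd : B (acl (Cmat rN) d) by rewrite -ad.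
  have hBhK : forall i, B (acl (Cmat rN) (h *+ (m * i))).
    by move=> i; rewrite mulrnA; apply: Bsub_mulnE.
  have hB0 : B (a0 (Cmat rN)) by case: hsub.
  have hs : forall i, inSB B (s ^+ i).
    by move=> i; apply: (homA_inSB _ (hsd i)); rewrite amulnE -mulrnA; apply: hBhK.
  have hBe : B (acl (Cmat rN) (d + h *+ (m * K))) by apply: Bsub_addE.
  have hBe' : B (acl (Cmat rN) (- d + h *+ (m * K))).
    by apply: Bsub_addE => //; apply: Bsub_oppE.
  have hu : inSB B ('X_[e'] : {mpoly R[r]}) by apply: (homA_inSB hBe' hXe').
  have hu' : inSB B ('X_[e] : {mpoly R[r]}) by apply: (homA_inSB hBe hXe).
  have huu : 'X_[e'] * 'X_[e] = s ^+ (K + K).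
    by rewrite -mpolyXD addmC hee -s_powE.
  apply: (mod_iso h4 hs hu hu' huu).
  + move=> [i x] /= hx; rewrite /loc_piece /= in hx *; rewrite ad in hx.
    have hB1 : B (aadd (acl (Cmat rN) d) (amuln (acl (Cmat rN) (h *+ m)) i)).
      by rewrite amulnE aaddE -mulrnA; apply: Bsub_addE.
    suff -> : aadd (a0 (Cmat rN)) (amuln (acl (Cmat rN) (h *+ m)) (K + i)) =
      aadd (aadd (acl (Cmat rN) d) (amuln (acl (Cmat rN) (h *+ m)) i)) (acl (Cmat rN) (- d + h *+ (m * K))).
      exact: h5 _ _ _ _ hB1 hBe' hXe' hx.
    agrp.
  + move=> [i x] /= hx; rewrite /loc_piece /= in hx *; rewrite ad.
    have hB1 : B (aadd (a0 (Cmat rN)) (amuln (acl (Cmat rN) (h *+ m)) i)).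
      by rewrite /a0 amulnE aaddE -mulrnA add0r.
    suff -> : aadd (acl (Cmat rN) d) (amuln (acl (Cmat rN) (h *+ m)) (K + i)) =
      aadd (aadd (a0 (Cmat rN)) (amuln (acl (Cmat rN) (h *+ m)) i)) (acl (Cmat rN) (d + h *+ (m * K))).
      exact: h5 _ _ _ _ hB1 hBe hXe hx.
    rewrite /a0 ?(aaddE, aoppE, amulnE); congr (acl _ _); apply/matrixP => ? ?; rewrite !(mxE, mulmxnE) ?pmulrn ?mulrzz ?PoszD ?PoszM. set c := (if _ then _ else _). ring.
  + move=> [l p] /= hp; apply: (homA_inSB _ hp).
    by rewrite /a0 amulnE aaddE -mulrnA add0r.
Qed.
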